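(* Let $n\ge2$, $Q>0$ real, and let $P\in\mathrm{Mat}(n^2,\mathbb{C})$ be a nontrivial solution of rank $r$ to $$P^*=P,\quad P^2=P,\quad Q^2(P_1P_2P_1-P_2P_1P_2)=P_1-P_2,$$ where $P_1=P\otimes I_n$, $P_2=I_n\otimes P$. Let $k=\tfrac12\operatorname{rank}(P_1-P_2)$. (a) $\operatorname{rank}(Q^2P_1P_2P_1-P_1)=\operatorname{rank}(Q^2P_2P_1P_2-P_2)=rn-k$. (b) $P$ satisfies $Q^2P_1P_2P_1=P_1$ and $Q^2P_2P_1P_2=P_2$ (i.e. $P$ is of Temperley–Lieb type) if and only if $k=rn$.
   Context: $I_n$ is the $n\times n$ identity matrix and $\otimes$ is the Kronecker product. A solution is trivial if $P=0$ or $P=I_n\otimes I_n$, nontrivial otherwise. *)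

(* Defs.v *)
(* complex numbers as R[i] (real_closed's complex) over a realType R
   (Stdlib's R is a realType, so R[i] is then the usual field C);
   Kronecker product = real_closed's tensmx (A *t B). *)
From HB Require Import structures.
From mathcomp Require Import all_boot all_order all_algebra.
From mathcomp Require Export reals.
From mathcomp Require Export complex mxtens.
Set Implicit Arguments. Unset Strict Implicit. Unset Printing Implicit Defensive.
Import Order.TTheory GRing.Theory Num.Theory.
Local Open Scope ring_scope.

Definition adjmx (R : rcfType) (m : nat) (A : 'M[R[i]]_m) : 'M[R[i]]_m :=
  (map_mx (@Num.conj R[i]) A)^T.

Definition P1 (R : rcfType) (n : nat) (P : 'M[R[i]]_(n * n)) : 'M[R[i]]_(n * n * n) :=
  P *t (1%:M : 'M[R[i]]_n).

(* P_2 = I_n (x) P, for P in Mat(n^2); tensmx gives a matrix of size n*(n*n),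
   which we reindex (castmx along n*(n*n) = n*n*n, a pure reinterpretation of the
   same lexicographic index (a,b,c)) so that it can be multiplied with P_1 *)
Definition P2 (R : rcfType) (n : nat) (P : 'M[R[i]]_(n * n)) : 'M[R[i]]_(n * n * n) :=
  castmx (mulnA n n n, mulnA n n n) ((1%:M : 'M[R[i]]_n) *t P).

(* Main.v *)
Require Import Defs.
From HB Require Import structures.
From mathcomp Require Import all_boot all_order all_algebra.
From mathcomp Require Import reals complex mxtens.
From mathcomp Require Import zify.
Import Order.TTheory GRing.Theory Num.Theory.
Local Open Scope ring_scope.

Lemma zm (V : zmodType) (a b c d : V) : a - c - (b - d) = a - b - (c - d).
Proof. by rewrite !opprB !addrA -!addrA; congr (_ + _); rewrite addrC addrA [d - b]addrC. Qed.

Section Abs.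
Variable R : rcfType.
Local Notation C := R[i].
Variable N : nat.
Implicit Types E F M : 'M[C]_N.

Lemma adjmxM M1 M2 : adjmx (M1 *m M2) = adjmx M2 *m adjmx M1.
Proof. by rewrite /adjmx map_mxM trmx_mul. Qed.
Lemma adjmxB M1 M2 : adjmx (M1 - M2) = adjmx M1 - adjmx M2.
Proof. by rewrite /adjmx map_mxB linearB. Qed.

Lemma mxadj0 M : M *m adjmx M = 0 -> M = 0.
Proof.
move=> H; apply/matrixP=> i j; rewrite [RHS]mxE.
have /eqP: (M *m adjmx M) i i = 0 by rewrite H mxE.
rewrite !mxE.
under eq_bigr do rewrite !mxE -normCK.
rewrite psumr_eq0; last by move=> k _; rewrite exprn_ge0.
move/allP => /(_ j (mem_index_enum j)) /=; rewrite sqrf_eq0 normr_eq0 => /eqP //.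
Qed.

Lemma idem_mulX m E (X : 'M[C]_(m, N)) : E *m E = E -> (X <= E)%MS -> X *m E = X.
Proof. by move=> EE /submxP[D ->]; rewrite -mulmxA EE. Qed.

Lemma rank_two E F : E *m E = E -> F *m F = F -> adjmx E = E -> adjmx F = F ->
  (\rank (E - F)%R + 2 * \rank (capmx E F) = \rank E + \rank F)%N.
Proof.
move=> EE FF aE aF.
set X := capmx E F; set Y := kermx (row_mx E F); set K := kermx (E - F).
have XE : X *m E = X by apply: idem_mulX; [|exact: capmxSl].
have XF : X *m F = X by apply: idem_mulX; [|exact: capmxSr].
have [YE YF] : Y *m E = 0 /\ Y *m F = 0.
  have /eqP := mulmx_ker (row_mx E F).
  by rewrite mul_mx_row row_mx_eq0 => /andP[/eqP -> /eqP ->].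
have KEF : K *m E = K *m F.
  by have /eqP := mulmx_ker (E - F); rewrite mulmxBr subr_eq0 => /eqP.
have XK : (X <= K)%MS by apply/sub_kermxP; rewrite mulmxBr XE XF subrr.
have YK : (Y <= K)%MS by apply/sub_kermxP; rewrite mulmxBr YE YF subrr.
have KXY : (K <= X + Y)%MS.
  have -> : K = K *m E + (K - K *m E) by rewrite addrC subrK.
  apply: addmx_sub_adds.
    by rewrite sub_capmx submxMl KEF submxMl.
  apply/sub_kermxP.
  have H1 : (K - K *m E) *m E = 0 by rewrite mulmxBl -[K *m E *m E]mulmxA EE subrr.
  have H2 : (K - K *m E) *m F = 0 by rewrite mulmxBl KEF -[K *m F *m F]mulmxA FF subrr.
  by rewrite mul_mx_row H1 H2 row_mx0.
have rXY0 : \rank (X :&: Y)%MS = 0%N.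
  have h1 : (X :&: Y)%MS *m E = (X :&: Y)%MS.
    by apply: idem_mulX => //; apply: submx_trans (capmxSl _ _) (capmxSl _ _).
  have h2 : (X :&: Y)%MS *m E = 0.
    by have /submxP[D ->] := capmxSr X Y; rewrite -mulmxA YE mulmx0.
  by rewrite -h1 h2 mxrank0.
have rK : \rank K = \rank (X + Y)%MS.
  by apply/eqP; rewrite eqn_leq !mxrankS // addsmx_sub XK YK.
have rXY := mxrank_sum_cap X Y; rewrite rXY0 addn0 in rXY.
have rK' : \rank K = (N - \rank (E - F)%R)%N by apply: mxrank_ker.
have rY : \rank Y = (N - \rank (row_mx E F))%N by apply: mxrank_ker.
have rEF : \rank (row_mx E F) = \rank (E + F)%MS.
  have ET : E^T = map_mx Num.conj E by rewrite -[in LHS]aE trmxK.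
  have FT : F^T = map_mx Num.conj F by rewrite -[in LHS]aF trmxK.
  rewrite -mxrank_tr tr_row_mx ET FT -map_col_mx mxrank_map.
  by rewrite (addsmxE E F).1.
have rS := mxrank_sum_cap E F.
have b1 : (\rank (E - F)%R <= N)%N by apply: rank_leq_row.
have b2 : (\rank (row_mx E F) <= N)%N by apply: rank_leq_row.
rewrite -/X in rS. rewrite rEF in rY. lia.
Qed.




Lemma relAB E F (q : C) :
  q *: (E *m F *m E - F *m E *m F) = E - F ->
  q *: (E *m F *m E) - E = q *: (F *m E *m F) - F.
Proof.
move=> h; apply/eqP; rewrite -subr_eq0; apply/eqP.
have -> : q *: (E *m F *m E) - E - (q *: (F *m E *m F) - F) =
   q *: (E *m F *m E - F *m E *m F) - (E - F).
  by rewrite scalerBr zm.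
by rewrite h subrr.
Qed.

Lemma rank_A E F (q : C) : E *m E = E -> F *m F = F -> q != 1 ->
  q *: (E *m F *m E - F *m E *m F) = E - F ->
  \rank (q *: (E *m F *m E) - E) = \rank (capmx E F).
Proof.
move=> EE FF q1 h.
set X := capmx E F.
have XE : X *m E = X by apply: idem_mulX; [|exact: capmxSl].
have XF : X *m F = X by apply: idem_mulX; [|exact: capmxSr].
have AE : q *: (E *m F *m E) - E = (q *: (E *m F) - 1%:M) *m E.
  by rewrite mulmxBl mul1mx -scalemxAl.
have AF : q *: (E *m F *m E) - E = (q *: (F *m E) - 1%:M) *m F.
  by rewrite (relAB _ _ _ h) mulmxBl mul1mx -scalemxAl.
have AX : (q *: (E *m F *m E) - E <= X)%MS.
  by rewrite /X sub_capmx {1}AE submxMl AF submxMl.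
apply/eqP; rewrite eqn_leq mxrankS //=; apply: mxrankS.
have XA : X *m (q *: (E *m F *m E) - E) = (q - 1) *: X.
  by rewrite mulmxBr -scalemxAr !mulmxA XE XF XE scalerBl scale1r.
have -> : X = ((q - 1)^-1 *: X) *m (q *: (E *m F *m E) - E).
  by rewrite -scalemxAl XA scalerA mulVf ?scale1r // subr_eq0.
exact: submxMl.
Qed.

Lemma adj_idem_EF E F : E *m E = E -> F *m F = F -> adjmx E = E -> adjmx F = F ->
  E *m F *m E = E -> E = E *m F.
Proof.
move=> EE FF aE aF h.
set G := E - E *m F.
have aG : adjmx G = E - F *m E by rewrite /G adjmxB adjmxM aE aF.
suff : G *m adjmx G = 0 by move/mxadj0 => /eqP; rewrite subr_eq0 => /eqP.
rewrite aG /G mulmxBl !mulmxBr !mulmxA EE h -[E *m F *m F]mulmxA FF h.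
by rewrite !subrr.
Qed.

Lemma q1_case E F : E *m E = E -> F *m F = F -> adjmx E = E -> adjmx F = F ->
  E *m F *m E - F *m E *m F = E - F -> E = F.
Proof.
move=> EE FF aE aF h.
have h1 : 1 *: (E *m F *m E - F *m E *m F) = E - F by rewrite scale1r.
set X := capmx E F.
have XE : X *m E = X by apply: idem_mulX; [|exact: capmxSl].
have XF : X *m F = X by apply: idem_mulX; [|exact: capmxSr].
have AX : (E *m F *m E - E <= X)%MS.
  have AE : E *m F *m E - E = (E *m F - 1%:M) *m E by rewrite mulmxBl mul1mx.
  have AF : E *m F *m E - E = (F *m E - 1%:M) *m F.
    by have := relAB _ _ _ h1; rewrite !scale1r => ->; rewrite mulmxBl mul1mx.
  by rewrite /X sub_capmx {1}AE submxMl AF submxMl.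
have XA : X *m (E *m F *m E - E) = 0.
  by rewrite mulmxBr !mulmxA XE XF XE subrr.
have aA : adjmx (E *m F *m E - E) = E *m F *m E - E.
  by rewrite adjmxB !adjmxM aE aF mulmxA.
have A0 : E *m F *m E - E = 0.
  apply: mxadj0; rewrite aA.
  by case/submxP: AX => D eqA; rewrite {1}eqA -[D *m X *m _]mulmxA XA mulmx0.
have EFE : E *m F *m E = E by apply/eqP; rewrite -subr_eq0 A0.
have FEF : F *m E *m F = F.
  have := relAB _ _ _ h1; rewrite !scale1r A0 => /eqP; rewrite eq_sym subr_eq0 => /eqP //.
have E1 := adj_idem_EF _ _ EE FF aE aF EFE.
have F1 := adj_idem_EF _ _ FF EE aF aE FEF.
by rewrite -aE E1 adjmxM aE aF -F1.
Qed.

End Abs.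
Arguments relAB {R N E F q}.
Arguments rank_A {R N E F q}.
Arguments rank_two {R N E F}.
Arguments q1_case {R N E F}.

Section Tens.
Variable R : rcfType.
Local Notation C := R[i].

Lemma rank_trace m (M : 'M[C]_m) : M *m M = M -> (\rank M)%:R = \tr M.
Proof.
move=> MM.
have [L HL] := row_fullP (col_base_full M).
have [B HB] := row_freeP (row_base_free M).
have CR := mulmx_base M.
move: (col_base M) (row_base M) L B HL HB CR => Cb Rb L B HL HB CR.
have e : Cb *m Rb *m Cb *m Rb = Cb *m Rb by rewrite -mulmxA CR MM.
have RC : Rb *m Cb = 1%:M.
  move: (congr1 (fun Z => L *m Z *m B) e) => /=.
  by rewrite !mulmxA HL !mul1mx -!mulmxA HB !mulmx1.
have -> : \tr M = \tr (Cb *m Rb) by rewrite CR.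
rewrite mxtrace_mulC RC; exact: (esym (mxtrace1 _ _)).
Qed.

Lemma trace1C m : \tr (1%:M : 'M[C]_m) = m%:R.
Proof. exact: mxtrace1. Qed.

Lemma tr_tens m p (A : 'M[C]_m) (B : 'M[C]_p) : \tr (A *t B) = \tr A * \tr B.
Proof. by rewrite /mxtrace mulr_sum; apply: eq_bigr => i _; rewrite mxE. Qed.

Lemma tr_cast m m' (e : m = m') (A : 'M[C]_m) : \tr (castmx (e, e) A) = \tr A.
Proof. by case: m' / e; rewrite castmx_id. Qed.

Lemma castmx_mulmx m m' (e : m = m') (A B : 'M[C]_m) :
  castmx (e,e) A *m castmx (e,e) B = castmx (e,e) (A *m B).
Proof. by case: m' / e; rewrite !castmx_id. Qed.

Lemma adjmx_cast m m' (e : m = m') (A : 'M[C]_m) :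
  adjmx (castmx (e,e) A) = castmx (e,e) (adjmx A).
Proof. by case: m' / e; rewrite !castmx_id. Qed.

Lemma adjmx_tens m p (A : 'M[C]_m) (B : 'M[C]_p) : adjmx (A *t B) = adjmx A *t adjmx B.
Proof. by rewrite /adjmx map_mxT trmx_tens. Qed.

Lemma adjmx1 m : adjmx (1%:M : 'M[C]_m) = 1%:M.
Proof. by rewrite /adjmx map_scalar_mx rmorph1 tr_scalar_mx. Qed.

Variable n : nat.
Variable P : 'M[C]_(n * n).
Hypothesis PP : P *m P = P.
Hypothesis aP : adjmx P = P.

Lemma P1_idem : P1 P *m P1 P = P1 P.
Proof. by rewrite /P1 tensmx_mul PP mulmx1. Qed.
Lemma P2_idem : P2 P *m P2 P = P2 P.
Proof. by rewrite /P2 castmx_mulmx tensmx_mul mulmx1 PP. Qed.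
Lemma P1_adj : adjmx (P1 P) = P1 P.
Proof. by rewrite /P1 adjmx_tens aP adjmx1. Qed.
Lemma P2_adj : adjmx (P2 P) = P2 P.
Proof. by rewrite /P2 adjmx_cast adjmx_tens aP adjmx1. Qed.

Lemma P1_rank : \rank (P1 P) = (\rank P * n)%N.
Proof.
apply/eqP; rewrite -(eqr_nat C) rank_trace ?P1_idem // /P1 tr_tens.
rewrite -rank_trace //; apply/eqP; rewrite natrM; congr (_ * _); exact: mxtrace1.
Qed.
Lemma P2_rank : \rank (P2 P) = (\rank P * n)%N.
Proof.
apply/eqP; rewrite -(eqr_nat C) rank_trace ?P2_idem // /P2 tr_cast tr_tens.
rewrite -(@rank_trace _ P PP); apply/eqP; rewrite natrM mulrC; congr (_ * _); exact: mxtrace1.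
Qed.


Lemma cast_idx (a b c : 'I_n) :
  cast_ord (esym (mulnA n n n)) (mxtens_index (mxtens_index (a, b), c))
  = mxtens_index (a, mxtens_index (b, c)).
Proof. by apply: val_inj => /=; rewrite mulnDl -mulnA addnA. Qed.

Lemma entries (h : P1 P = P2 P) a b c a' b' c' :
  P (mxtens_index (a,b)) (mxtens_index (a',b')) * (c == c')%:R
  = (a == a')%:R * P (mxtens_index (b,c)) (mxtens_index (b',c')).
Proof.
have := congr1 (fun M : 'M[C]_(n * n * n) => M (mxtens_index (mxtens_index (a,b), c))
                  (mxtens_index (mxtens_index (a',b'), c'))) h => /=.
by rewrite /P1 /P2 castmxE /= !cast_idx !tensmxE !mxE.
Qed.

Lemma I11 : (1%:M : 'M[C]_n) *t (1%:M : 'M[C]_n) = 1%:M.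
Proof.
apply/matrixP => i j; case: (mxtens_indexP i) => x y; case: (mxtens_indexP j) => x' y'.
by rewrite tensmxE !mxE (inj_eq (can_inj (@mxtens_indexK n n))) xpair_eqE -natrM mulnb.
Qed.

Lemma trivialP (h : P1 P = P2 P) (n0 : (0 < n)%N) :
  P = 0 \/ P = (1%:M : 'M[C]_n) *t (1%:M : 'M[C]_n).
Proof.
have off : forall i j, i != j -> P i j = 0.
  move=> i j; case: (mxtens_indexP i) => x y; case: (mxtens_indexP j) => x' y'.
  rewrite (inj_eq (can_inj (@mxtens_indexK n n))) xpair_eqE.
  case: (eqVneq x x') => [<-|nx] /= ny.
    have := entries h x x y x x y'; rewrite eqxx (negbTE ny) mulr0 mul1r.
    by move/esym.
  have := entries h x y x x' y' x; rewrite eqxx (negbTE nx) mulr1 mul0r.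
  by [].
have diag : forall a b c, P (mxtens_index (a, b)) (mxtens_index (a, b))
                        = P (mxtens_index (b, c)) (mxtens_index (b, c)).
  by move=> a b c; have := entries h a b c a b c; rewrite !eqxx mulr1 mul1r.
pose x0 := Ordinal n0.
pose l := P (mxtens_index (x0, x0)) (mxtens_index (x0, x0)).
have dl : forall i, P i i = l.
  move=> i; case: (mxtens_indexP i) => x y.
  by rewrite (diag x y y) -(diag x0 y y) -(diag x0 x0 y).
have Pl : P = l *: 1%:M.
  apply/matrixP => i j; rewrite !mxE; case: (eqVneq i j) => [<-|nij].
    by rewrite dl mulr1.
  by rewrite off // mulr0.
have ll : l * l = l.
  have := congr1 (fun M : 'M[C]_(n * n) => M (mxtens_index (x0, x0)) (mxtens_index (x0, x0))) PP.
  by rewrite /= {1 2}Pl -scalemxAl mul1mx !mxE eqxx mulr1 -/l.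
have : l = 0 \/ l = 1.
  have : l * (l - 1) = 0 by rewrite mulrBr mulr1 ll subrr.
  by move/eqP; rewrite mulf_eq0 subr_eq0 => /orP[/eqP|/eqP]; [left|right].
case=> l01; [left|right]; rewrite Pl l01 ?scale0r // scale1r I11 //.
Qed.

End Tens.

From mathcomp Require Import lra.

Theorem proposition4 (R : realType) (n : nat) (Q : R) (P : 'M[R[i]]_(n * n)) :
  (2 <= n)%N -> 0 < Q ->
  adjmx P = P -> P *m P = P ->
  (Q ^+ 2)%:C%C *: (P1 P *m P2 P *m P1 P - P2 P *m P1 P *m P2 P) = P1 P - P2 P ->
  P != 0 -> P != (1%:M : 'M[R[i]]_n) *t (1%:M : 'M[R[i]]_n) ->
  let r := \rank P in
  let k : R := (\rank (P1 P - P2 P))%:R / 2 in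
  (* (a) *)
  ((\rank ((Q ^+ 2)%:C%C *: (P1 P *m P2 P *m P1 P) - P1 P))%:R = (r * n)%:R - k /\
   (\rank ((Q ^+ 2)%:C%C *: (P2 P *m P1 P *m P2 P) - P2 P))%:R = (r * n)%:R - k) /\
  (* (b) *)
  (((Q ^+ 2)%:C%C *: (P1 P *m P2 P *m P1 P) = P1 P /\
    (Q ^+ 2)%:C%C *: (P2 P *m P1 P *m P2 P) = P2 P) <-> k = (r * n)%:R).
Proof.
move=> n2 Q0 aP PP hrel nz nI r k.
have n0 : (0 < n)%N by lia.
have EE := @P1_idem _ _ P PP; have FF := @P2_idem _ _ P PP.
have aE := @P1_adj _ _ P aP; have aF := @P2_adj _ _ P aP.
have rE := @P1_rank _ _ P PP; have rF := @P2_rank _ _ P PP.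
move: EE FF aE aF rE rF hrel.
set q := (Q ^+ 2)%:C%C; set E := P1 P; set F := P2 P.
move=> EE FF aE aF rE rF hrel.
have q1 : q != 1.
  apply/negP => /eqP q1; move: hrel; rewrite q1 scale1r => hrel.
  have EF := q1_case EE FF aE aF hrel.
  by case: (@trivialP _ _ P PP EF n0) => /eqP; rewrite ?(negbTE nz) ?(negbTE nI).
have rA := rank_A EE FF q1 hrel.
have r2 := rank_two EE FF aE aF.
rewrite rE rF -/r in r2.
have AB := relAB hrel.
have keyR : (\rank (q *: (E *m F *m E) - E))%:R = (r * n)%:R - k :> R.
  rewrite rA /k.
  move/(congr1 (fun x : nat => x%:R : R)): r2; rewrite !natrD natrM => r2.
  lra.
split; first by split; rewrite -?AB keyR.
split.
  case=> h1 _; move: keyR; rewrite h1 subrr mxrank0 => h0; lra.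
move=> hk.
have : (\rank (q *: (E *m F *m E) - E))%:R = 0 :> R by rewrite keyR hk subrr.
move/eqP; rewrite pnatr_eq0 mxrank_eq0 => /eqP A0.
by split; apply/eqP; rewrite -subr_eq0 ?A0 // -AB A0.
Qed.
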